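(* Given two finite-valued logics $\mathbf{M}_1$ and $\mathbf{M}_2$ over the same propositional language, it is decidable whether $\mathrm{Taut}(\mathbf{M}_1)=\mathrm{Taut}(\mathbf{M}_2)$, and it is decidable whether $\mathbf{M}_1\unlhd\mathbf{M}_2$, i.e., whether $\mathrm{Taut}(\mathbf{M}_1)\subseteq\mathrm{Taut}(\mathbf{M}_2)$.
   Context: A propositional language has variables $X_1,X_2,\ldots$ and finitely many connectives with arities. A finite-valued logic $\mathbf{M}$ is given by a finite set $V(\mathbf{M})$ of truth values, designated values $V^+(\mathbf{M})\subseteq V(\mathbf{M})$, and a truth function for each connective. A valuation maps variables to truth values and extends to formulas via the truth functions; a tautology is a formula designated under every valuation; $\mathrm{Taut}(\mathbf{M})$ is the set of tautologies. *)

(* Defs.v *)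
From mathcomp Require Import all_boot.
Set Implicit Arguments. Unset Strict Implicit. Unset Printing Implicit Defensive.

(* A language: the list of arities of its finitely many connectives;
   connective number i has arity nth 0 L i. *)
Definition language := seq nat.

Inductive form : Type :=
| Var of nat
| App of nat & seq form.

Fixpoint wf (L : language) (phi : form) : bool :=
  match phi with
  | Var _ => true
  | App i args =>
      [&& i < size L, size args == nth 0 L i &
          (fix wfs (s : seq form) : bool :=
             match s with [::] => true | a :: s' => wf L a && wfs s' end) args]
  end.

(* A finite-valued logic, given by finite data: the truth values are
   0, 1, ..., nv (i.e. nv.+1 values), the designated values are those in
   [des], and the truth table of connective i is the list [nth [::] tab i],
   whose entry at index (a_1 ... a_k written in base nv.+1) is the value of
   the connective on arguments a_1, ..., a_k (taken modulo nv.+1, so every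
   datum denotes a well-defined logic; missing entries default to 0). *)
Record logic : Type := Logic {
  nv : nat;
  des : seq nat;
  tab : seq (seq nat)
}.

Definition nvals (M : logic) : nat := (nv M).+1.

Definition designated (M : logic) (x : nat) : bool := x \in des M.

Definition tindex (b : nat) (args : seq nat) : nat :=
  foldl (fun acc a => acc * b + a) 0 args.

Definition truth_fun (M : logic) (i : nat) (args : seq nat) : nat :=
  nth 0 (nth [::] (tab M) i) (tindex (nvals M) args) %% nvals M.

Fixpoint feval (M : logic) (v : nat -> nat) (phi : form) : nat :=
  match phi with
  | Var n => v n
  | App i args =>
      truth_fun M i
        ((fix evs (s : seq form) : seq nat :=
            match s with [::] => [::] | a :: s' => feval M v a :: evs s' end) args)
  end.

Definition valuation (M : logic) (v : nat -> nat) : Prop :=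
  forall n, v n < nvals M.

Definition Taut (L : language) (M : logic) (phi : form) : Prop :=
  wf L phi /\ forall v, valuation M v -> designated M (feval M v phi).

Inductive prog : Type :=
| PZero
| PSucc
| PProj of nat
| PComp of prog & seq prog
| PPrec of prog & prog
| PMu of prog.

Fixpoint peval (fuel : nat) (p : prog) (xs : seq nat) {struct fuel} : option nat :=
  match fuel with
  | 0 => None
  | k.+1 =>
    match p with
    | PZero => Some 0
    | PSucc => Some (nth 0 xs 0).+1
    | PProj i => Some (nth 0 xs i)
    | PComp f gs =>
        let rs := map (fun g => peval k g xs) gs in
        if all (fun r => r != None) rs
        then peval k f (map (fun r => odflt 0 r) rs)
        else None
    | PPrec f g =>
        match xs with
        | [::] => peval k f [::]
        | 0 :: rest => peval k f rest
        | x.+1 :: rest =>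
            match peval k (PPrec f g) (x :: rest) with
            | Some y => peval k g (x :: y :: rest)
            | None => None
            end
        end
    | PMu f =>
        (fix search (m : nat) (n : nat) : option nat :=
           match m with
           | 0 => None
           | m'.+1 =>
               match peval k f (n :: xs) with
               | Some 0 => Some n
               | Some _ => search m' n.+1
               | None => None
               end
           end) k 0
    end
  end.

Definition cpair (a b : nat) : nat := 'C(a + b + 1, 2) + b.

Fixpoint enc_seq (T : Type) (e : T -> nat) (s : seq T) : nat :=
  match s with
  | [::] => 0
  | x :: s' => (cpair (e x) (enc_seq e s')).+1
  end.

Definition enc_logic (M : logic) : nat :=
  cpair (nv M) (cpair (enc_seq id (des M)) (enc_seq (enc_seq id) (tab M))).

Definition enc_inst (L : language) (M1 M2 : logic) : nat :=
  cpair (enc_seq id L) (cpair (enc_logic M1) (enc_logic M2)).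

Definition decidable_inst (Q : language -> logic -> logic -> Prop) : Prop :=
  exists p : prog, forall (L : language) (M1 M2 : logic),
    exists (k b : nat),
      peval k p [:: enc_inst L M1 M2] = Some b /\ (b != 0 <-> Q L M1 M2).

(* Main.v *)
Require Import Defs.
From mathcomp Require Import all_boot.
From Stdlib Require List.
From Stdlib Require Import Setoid Morphisms Classical.
Set Implicit Arguments. Unset Strict Implicit. Unset Printing Implicit Defensive.

Fixpoint srch (F : nat -> option nat) (m n : nat) : option nat :=
  match m with
  | 0 => None
  | m'.+1 => match F n with
             | Some 0 => Some n
             | Some _ => srch F m' n.+1
             | None => None end
  end.

Lemma srchE k f xs : forall m n,
  (fix search (m n : nat) {struct m} : option nat :=
     match m with 0 => None
     | m'.+1 => match peval k f (n :: xs) with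
                | Some 0 => Some n | Some _ => search m' n.+1 | None => None end end) m n
  = srch (fun n => peval k f (n :: xs)) m n.
Proof. elim=> [|m IH] n //=. by rewrite IH. Qed.

Lemma pevalMu k f xs : peval k.+1 (PMu f) xs = srch (fun n => peval k f (n :: xs)) k 0.
Proof. exact: srchE. Qed.

Lemma pevalComp k f gs xs : peval k.+1 (PComp f gs) xs =
  if all (fun r => r != None) (map (fun g => peval k g xs) gs)
  then peval k f (map (fun r => odflt 0 r) (map (fun g => peval k g xs) gs)) else None.
Proof. by []. Qed.

Lemma pevalPrec0 k f g rest : peval k.+1 (PPrec f g) (0 :: rest) = peval k f rest.
Proof. by []. Qed.
Lemma pevalPrecN k f g : peval k.+1 (PPrec f g) [::] = peval k f [::].
Proof. by []. Qed.
Lemma pevalPrecS k f g x rest : peval k.+1 (PPrec f g) (x.+1 :: rest) =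
  match peval k (PPrec f g) (x :: rest) with
  | Some y => peval k g (x :: y :: rest) | None => None end.
Proof. by []. Qed.

Lemma srch_mono (F G : nat -> option nat) m n y :
  (forall n z, F n = Some z -> G n = Some z) -> srch F m n = Some y -> srch G m.+1 n = Some y.
Proof.
move=> HFG; elim: m n => [|m IHm] n //=.
case E: (F n) => [[|a]|] //.
+ by rewrite (HFG _ _ E).
+ rewrite (HFG _ _ E). exact: IHm.
Qed.

Lemma peval_mono1 k p xs y : peval k p xs = Some y -> peval k.+1 p xs = Some y.
Proof.
elim: k p xs y => [|k IHk] p xs y //.
case: p => [||i|f gs|f g|f].
- by [].
- by [].
- by [].
- rewrite !pevalComp.
  have Hmap : all (fun r => r != None) [seq peval k g xs | g <- gs] ->
     [seq peval k.+1 g xs | g <- gs] = [seq peval k g xs | g <- gs].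
    elim: gs => [|g gs IHg] // /andP[Hg Hgs].
    rewrite !map_cons.
    case E: (peval k g xs) Hg => [z|] // _.
    by rewrite (IHk _ _ _ E) IHg.
  case: ifP => // Hall H.
  rewrite Hmap // Hall. exact: IHk.
- case: xs => [|[|x] rest].
  + rewrite !pevalPrecN. exact: IHk.
  + rewrite !pevalPrec0. exact: IHk.
  + rewrite !pevalPrecS.
    case E: (peval k (PPrec f g) (x :: rest)) => [z|] // H.
    rewrite (IHk _ _ _ E). exact: IHk.
- rewrite !pevalMu. apply: srch_mono => n z. exact: IHk.
Qed.

Lemma peval_mono k k' p xs y : k <= k' -> peval k p xs = Some y -> peval k' p xs = Some y.
Proof.
move=> /subnK <-. elim: (k' - k) => [|d IH] // H. rewrite addSn. apply: peval_mono1. exact: IH.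
Qed.

Definition prog_ind' (P : prog -> Prop) (H0 : P PZero) (H1 : P PSucc)
  (H2 : forall i, P (PProj i))
  (H3 : forall f gs, P f -> (forall g, List.In g gs -> P g) -> P (PComp f gs))
  (H4 : forall f g, P f -> P g -> P (PPrec f g)) (H5 : forall f, P f -> P (PMu f)) :
  forall p, P p :=
  fix F p := match p with
  | PZero => H0 | PSucc => H1 | PProj i => H2 i
  | PComp f gs => H3 f gs (F f)
      ((fix G (s : seq prog) : forall g, List.In g s -> P g :=
         match s with
         | [::] => fun g (H : List.In g [::]) => match H with end
         | a :: s' => fun g H => match H with
                      | or_introl e => eq_ind a P (F a) g e
                      | or_intror h => G s' g h end
         end) gs)
  | PPrec f g => H4 f g (F f) (F g)
  | PMu f => H5 f (F f)
  end.

Fixpoint den (p : prog) (xs : seq nat) : nat :=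
  match p with
  | PZero => 0
  | PSucc => (nth 0 xs 0).+1
  | PProj i => nth 0 xs i
  | PComp f gs => den f (map (fun g => den g xs) gs)
  | PPrec f g => match xs with
                 | [::] => den f [::]
                 | x :: rest => (fix r n := match n with
                                 | 0 => den f rest
                                 | n'.+1 => den g (n' :: r n' :: rest) end) x
                 end
  | PMu _ => 0
  end.

Fixpoint mufree (p : prog) : bool :=
  match p with
  | PComp f gs => mufree f && all mufree gs
  | PPrec f g => mufree f && mufree g
  | PMu _ => false
  | _ => true
  end.

Definition evt (p : prog) xs y := exists k, forall k', k <= k' -> peval k' p xs = Some y.

Lemma evt_of p xs y k : peval k p xs = Some y -> evt p xs y.
Proof. move=> H; exists k => k' Hk; exact: peval_mono H. Qed.

Lemma denPrecS f g x rest : den (PPrec f g) (x.+1 :: rest) =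
  den g (x :: den (PPrec f g) (x :: rest) :: rest).
Proof. by []. Qed.
Lemma denPrec0 f g rest : den (PPrec f g) (0 :: rest) = den f rest.
Proof. by []. Qed.

Lemma map_evt (gs : seq prog) xs :
  (forall g, List.In g gs -> evt g xs (den g xs)) ->
  exists k, forall k', k <= k' -> map (fun g => peval k' g xs) gs = map (fun g => Some (den g xs)) gs.
Proof.
elim: gs => [|g gs IH] H; first by exists 0.
have [k1 Hk1] := H g (or_introl erefl).
have [k2 Hk2] := IH (fun g' h => H g' (or_intror h)).
exists (maxn k1 k2) => k' Hk'.
rewrite !map_cons Hk1; last exact: leq_trans (leq_maxl _ _) Hk'.
by rewrite Hk2 //; exact: leq_trans (leq_maxr _ _) Hk'.
Qed.

Lemma den_ok p : mufree p -> forall xs, evt p xs (den p xs).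
Proof.
elim/prog_ind': p.
- move=> _ xs; exists 1 => [[|k]] //.
- move=> _ xs; exists 1 => [[|k]] //.
- move=> i _ xs; exists 1 => [[|k]] //.
- move=> f gs IHf IHgs /andP[Hf Hgs] xs.
  have Hall : forall g, List.In g gs -> mufree g.
    move=> g; elim: gs Hgs {IHgs} => [|g' gs' IH] //= /andP[H1 H2] [<-|h] //.
    exact: IH.
  have [k1 Hk1] := map_evt (fun g h => IHgs g h (Hall g h) xs).
  have [k2 Hk2] := IHf Hf (map (fun g => den g xs) gs).
  exists (maxn k1 k2).+1 => [[|k']] // Hk'.
  rewrite pevalComp Hk1; last exact: leq_trans (leq_maxl _ _) Hk'.
  have -> : all (fun r => r != None) [seq Some (den g xs) | g <- gs].
    by clear; elim: gs.
  rewrite -map_comp /=. apply: Hk2. exact: leq_trans (leq_maxr _ _) Hk'.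
- move=> f g IHf IHg /andP[Hf Hg] [|x rest].
  + have [k Hk] := IHf Hf [::]. exists k.+1 => [[|k']] // H. rewrite pevalPrecN. exact: Hk.
  + elim: x => [|x IHx].
    * have [k Hk] := IHf Hf rest. exists k.+1 => [[|k']] // H. rewrite pevalPrec0. exact: Hk.
    * have [k1 Hk1] := IHx.
      have [k2 Hk2] := IHg Hg (x :: den (PPrec f g) (x :: rest) :: rest).
      exists (maxn k1 k2).+1 => [[|k']] // H. rewrite pevalPrecS Hk1; last exact: leq_trans (leq_maxl _ _) H.
      rewrite denPrecS. apply: Hk2. exact: leq_trans (leq_maxr _ _) H.
- by [].
Qed.

Lemma unif_evt f xs (F : nat -> nat) n : (forall s, evt f (s :: xs) (F s)) ->
  exists K, forall s k', s <= n -> K <= k' -> peval k' f (s :: xs) = Some (F s).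
Proof.
move=> H; elim: n => [|n [K HK]].
- have [k Hk] := H 0. exists k => s k'; rewrite leqn0 => /eqP -> ; exact: Hk.
- have [k Hk] := H n.+1. exists (maxn K k) => s k'; rewrite leq_eqVlt => /orP[/eqP -> | Hs] Hk'.
  + apply: Hk; exact: leq_trans (leq_maxr _ _) Hk'.
  + apply: HK => //; exact: leq_trans (leq_maxl _ _) Hk'.
Qed.

Lemma srch_find (G : nat -> option nat) (F : nat -> nat) n : F n = 0 ->
  (forall s, s < n -> F s != 0) -> (forall s, s <= n -> G s = Some (F s)) ->
  forall m j, j <= n -> n - j < m -> srch G m j = Some n.
Proof.
move=> Hn Hlt HG; elim=> [|m IH] j Hj Hm //=.
rewrite HG //. case: (ltngtP j n) Hj => // [Hjn|->] _.
- have := Hlt _ Hjn; case: (F j) => // a _. apply: IH => //. 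
  by rewrite subnS -ltnS prednK ?subn_gt0.
- by rewrite Hn.
Qed.

Lemma evt_Mu f xs (F : nat -> nat) n : (forall s, evt f (s :: xs) (F s)) -> F n = 0 ->
  (forall s, s < n -> F s != 0) -> evt (PMu f) xs n.
Proof.
move=> H Hn Hlt. have [K HK] := unif_evt n H.
exists (maxn K n.+1).+1 => [[|k']] // Hk'.
rewrite pevalMu. apply: (srch_find (F := F)) => //.
- move=> s Hs; apply: HK => //; exact: leq_trans (leq_maxl _ _) Hk'.
- rewrite subn0. exact: leq_trans (leq_maxr _ _) Hk'.
Qed.

Lemma evt_fun p xs y y' : evt p xs y -> evt p xs y' -> y = y'.
Proof.
move=> [k1 H1] [k2 H2]. have := H1 (maxn k1 k2) (leq_maxl _ _).
by rewrite H2 ?leq_maxr // => [[]].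
Qed.

Lemma evt_Comp2 f g1 g2 xs a b c : evt g1 xs a -> evt g2 xs b -> evt f [:: a; b] c ->
  evt (PComp f [:: g1; g2]) xs c.
Proof.
move=> [k1 H1] [k2 H2] [k3 H3]. exists (maxn k1 (maxn k2 k3)).+1 => [[|k]] // Hk.
rewrite ltnS !geq_max in Hk; case/and3P: Hk => h1 h2 h3.
by rewrite pevalComp /= H1 ?H2 //= H3.
Qed.

Lemma evt_Comp1 f g1 xs a c : evt g1 xs a -> evt f [:: a] c -> evt (PComp f [:: g1]) xs c.
Proof.
move=> [k1 H1] [k3 H3]. exists (maxn k1 k3).+1 => [[|k]] // Hk.
rewrite ltnS !geq_max in Hk; case/andP: Hk => h1 h3.
by rewrite pevalComp /= H1 //= H3.
Qed.

Definition kp (n : nat) : prog := iter n (fun p => PComp PSucc [:: p]) PZero.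
Lemma den_kp n xs : den (kp n) xs = n.
Proof. by elim: n => //= n ->. Qed.
Lemma mf_kp n : mufree (kp n).
Proof. by elim: n => //= n ->. Qed.
Global Opaque kp.

Definition padd := PPrec (PProj 0) (PComp PSucc [:: PProj 1]).
Lemma den_add a b xs : den padd (a :: b :: xs) = a + b.
Proof. elim: a => // a IH. by rewrite denPrecS IH /=. Qed.
Global Opaque padd.

Definition pmul := PPrec PZero (PComp padd [:: PProj 1; PProj 2]).
Lemma den_mul a b xs : den pmul (a :: b :: xs) = a * b.
Proof. elim: a => // a IH. by rewrite denPrecS IH /= den_add mulSn addnC. Qed.
Global Opaque pmul.

Definition ppred := PPrec PZero (PProj 0).
Lemma den_pred a xs : den ppred (a :: xs) = a.-1.
Proof. by case: a. Qed.
Global Opaque ppred.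

Definition psub' := PPrec (PProj 0) (PComp ppred [:: PProj 1]).
Lemma den_sub' b a xs : den psub' (b :: a :: xs) = a - b.
Proof. elim: b => [|b IH]; first by rewrite subn0. by rewrite denPrecS IH /= den_pred subnS. Qed.
Global Opaque psub'.

Definition psub := PComp psub' [:: PProj 1; PProj 0].
Lemma den_sub a b xs : den psub (a :: b :: xs) = a - b.
Proof. by rewrite /= den_sub'. Qed.
Global Opaque psub.

Definition psg := PPrec PZero (kp 1).
Lemma den_sg a xs : den psg (a :: xs) = (a != 0).
Proof. by case: a. Qed.
Global Opaque psg.

Definition plt := PComp psg [:: PComp psub [:: PProj 1; PProj 0]].
Lemma den_lt a b xs : den plt (a :: b :: xs) = (a < b).
Proof. by rewrite /= den_sub den_sg subn_eq0 ltnNge. Qed.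
Global Opaque plt.

Definition pif := PPrec (PProj 1) (PProj 2).
Lemma den_if c a b xs : den pif (c :: a :: b :: xs) = if c != 0 then a else b.
Proof. by case: c. Qed.
Global Opaque pif.

Definition pT := PPrec PZero (PComp padd [:: PProj 1; PProj 0]).
Lemma den_T n xs : den pT (n :: xs) = 'C(n, 2).
Proof. elim: n => // n IH. by rewrite denPrecS IH /= den_add binS bin1. Qed.
Global Opaque pT.

Definition pcpair := PComp padd [:: PComp pT [:: PComp PSucc [:: PComp padd [:: PProj 0; PProj 1]]]; PProj 1].
Lemma den_cpair a b xs : den pcpair (a :: b :: xs) = cpair a b.
Proof. by rewrite /= den_add den_T den_add /cpair addn1. Qed.
Global Opaque pcpair.

Fixpoint bmu (P : nat -> bool) (b : nat) : nat :=
  match b with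
  | 0 => 0
  | b'.+1 => let r := bmu P b' in if r < b' then r else if P b' then b' else b'.+1
  end.

Definition pbmu (F : prog) := PPrec PZero
  (PComp pif [:: PComp plt [:: PProj 1; PProj 0]; PProj 1;
      PComp pif [:: PComp F [:: PProj 0; PProj 2]; PProj 0; PComp PSucc [:: PProj 0]]]).
Lemma den_bmu F b y xs : den (pbmu F) (b :: y :: xs) = bmu (fun s => den F [:: s; y] != 0) b.
Proof.
elim: b => // b IH. rewrite denPrecS IH /=.
rewrite den_if /= den_lt den_if /=.
by case: (bmu _ b < b).
Qed.
Global Opaque pbmu.

Lemma bmu_le P b : bmu P b <= b.
Proof. elim: b => //= b IH. case: ifP => [H|_]; first exact: ltnW. by case: ifP. Qed.
Lemma bmu_lt P b : bmu P b < b -> P (bmu P b).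
Proof.
elim: b => //= b IH. case: ifP => [H _|Hn]; first exact: IH.
case: ifP => //. by rewrite ltnn.
Qed.
Lemma bmu_min P b s : s < bmu P b -> ~~ P s.
Proof.
elim: b => //= b IH. case: ifP => [H|Hn]; first exact: IH.
have Hb : bmu P b = b by apply/eqP; rewrite eqn_leq bmu_le leqNgt Hn.
case: ifP => HP Hs.
- apply: IH; by rewrite Hb.
- move: Hs; rewrite ltnS leq_eqVlt => /orP[/eqP->|Hs]; first by rewrite HP.
  apply: IH; by rewrite Hb.
Qed.
Lemma bmu_eq (P : nat -> bool) b n : P n -> (forall s, s < n -> ~~ P s) -> n < b -> bmu P b = n.
Proof.
move=> Hn Hmin Hb. case: (ltngtP (bmu P b) n) => // H.
- have := Hmin _ H. by rewrite bmu_lt // (ltn_trans H Hb).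
- have := bmu_min H. by rewrite Hn.
Qed.
Lemma bmu_none (P : nat -> bool) b : (forall s, s < b -> ~~ P s) -> bmu P b = b.
Proof.
move=> H. apply/eqP; rewrite eqn_leq bmu_le /= leqNgt; apply/negP => Hlt.
by have := H _ Hlt; rewrite bmu_lt.
Qed.

Lemma eq_bmu (P Q : nat -> bool) b : (forall s, P s = Q s) -> bmu P b = bmu Q b.
Proof. move=> H; elim: b => //= b ->. by rewrite H. Qed.

Definition cdiag z := bmu (fun d => z < 'C(d.+2, 2)) z.+1.
Definition csnd z := z - 'C((cdiag z).+1, 2).
Definition cfst z := cdiag z - csnd z.
Definition ctl c := csnd c.-1.
Definition chd c := cfst c.-1.
Definition cdrop i c := iter i ctl c.
Definition cnth c i := chd (cdrop i c).

Lemma bin2_ge n : n <= 'C(n.+1, 2).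
Proof. by rewrite binS bin1 leq_addl. Qed.

Lemma cdiag_pair a b : cdiag (cpair a b) = a + b.
Proof.
rewrite /cdiag /cpair. apply: bmu_eq.
- by rewrite addn1 [in X in _ < X]binS bin1 ltn_add2l ltnS leq_addl.
- move=> s Hs. rewrite -leqNgt. apply: leq_trans (leq_addr _ _).
  apply: leq_bin2l. by rewrite addn1.
- rewrite ltnS. apply: leq_trans (leq_addr _ _). rewrite addn1. exact: bin2_ge.
Qed.

Lemma csnd_pair a b : csnd (cpair a b) = b.
Proof. by rewrite /csnd cdiag_pair {1}/cpair addn1 addKn. Qed.
Lemma cfst_pair a b : cfst (cpair a b) = a.
Proof. by rewrite /cfst cdiag_pair csnd_pair addnK. Qed.

Definition pdiag := PComp (pbmu (PComp plt [:: PProj 1; PComp pT [:: PComp PSucc [:: PComp PSucc [:: PProj 0]]]]))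
  [:: PComp PSucc [:: PProj 0]; PProj 0].
Lemma den_diag z xs : den pdiag (z :: xs) = cdiag z.
Proof. rewrite /= den_bmu. apply: eq_bmu => s. rewrite /= den_T den_lt. by case: (_ < _). Qed.
Global Opaque pdiag.

Definition psnd := PComp psub [:: PProj 0; PComp pT [:: PComp PSucc [:: pdiag]]].
Lemma den_snd z xs : den psnd (z :: xs) = csnd z.
Proof. by rewrite /= den_diag den_T den_sub. Qed.
Global Opaque psnd.
Definition pfst := PComp psub [:: pdiag; psnd].
Lemma den_fst z xs : den pfst (z :: xs) = cfst z.
Proof. by rewrite /= den_diag den_snd den_sub. Qed.
Global Opaque pfst.
Definition ptl := PComp psnd [:: ppred].
Lemma den_tl z xs : den ptl (z :: xs) = ctl z.
Proof. by rewrite /= den_pred den_snd. Qed.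
Global Opaque ptl.
Definition phd := PComp pfst [:: ppred].
Lemma den_hd z xs : den phd (z :: xs) = chd z.
Proof. by rewrite /= den_pred den_fst. Qed.
Global Opaque phd.
Definition pdrop := PPrec (PProj 0) (PComp ptl [:: PProj 1]).
Lemma den_drop i c xs : den pdrop (i :: c :: xs) = cdrop i c.
Proof. elim: i => // i IH. by rewrite denPrecS IH /= den_tl. Qed.
Global Opaque pdrop.
Definition pnth := PComp phd [:: PComp pdrop [:: PProj 1; PProj 0]].
Lemma den_nth c i xs : den pnth (c :: i :: xs) = cnth c i.
Proof. by rewrite /= den_drop den_hd. Qed.
Global Opaque pnth.
Definition ppush := PComp PSucc [:: pcpair].
Lemma den_push a c xs : den ppush (a :: c :: xs) = (cpair a c).+1.
Proof. by rewrite /= den_cpair. Qed.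
Global Opaque ppush.

Lemma csnd0 : csnd 0 = 0. Proof. exact: (csnd_pair 0 0). Qed.
Lemma cfst0 : cfst 0 = 0. Proof. exact: (cfst_pair 0 0). Qed.
Lemma ctl0 : ctl 0 = 0. Proof. exact: csnd0. Qed.
Lemma chd0 : chd 0 = 0. Proof. exact: cfst0. Qed.
Lemma ctl_cons x c : ctl (cpair x c).+1 = c. Proof. exact: csnd_pair. Qed.
Lemma chd_cons x c : chd (cpair x c).+1 = x. Proof. exact: cfst_pair. Qed.
Lemma cdrop0 i : cdrop i 0 = 0.
Proof. elim: i => //= i IH. by rewrite IH ctl0. Qed.

Lemma cdrop_enc i s : cdrop i (enc_seq id s) = enc_seq id (drop i s).
Proof.
elim: i s => [|i IH] s; first by rewrite drop0.
case: s => [|x s]; first by rewrite cdrop0.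
by rewrite /cdrop iterSr /= ctl_cons -IH.
Qed.

Lemma chd_enc s : chd (enc_seq id s) = nth 0 s 0.
Proof. case: s => [|x s] /=; [exact: chd0 | exact: chd_cons]. Qed.

Lemma cnth_enc s i : cnth (enc_seq id s) i = nth 0 s i.
Proof. by rewrite /cnth cdrop_enc chd_enc nth_drop addn0. Qed.

Definition ppow' := PPrec (kp 1) (PComp pmul [:: PProj 1; PProj 2]).
Lemma den_pow' b a xs : den ppow' (b :: a :: xs) = a ^ b.
Proof. elim: b => [|b IH]; first by rewrite denPrec0 den_kp. by rewrite denPrecS IH /= den_mul expnS mulnC. Qed.
Global Opaque ppow'.
Definition ppow := PComp ppow' [:: PProj 1; PProj 0].
Lemma den_pow a b xs : den ppow (a :: b :: xs) = a ^ b.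
Proof. by rewrite /= den_pow'. Qed.
Global Opaque ppow.

Definition pdiv := PComp pif [:: PProj 1;
   PComp (pbmu (PComp plt [:: PComp pfst [:: PProj 1];
                  PComp pmul [:: PComp PSucc [:: PProj 0]; PComp psnd [:: PProj 1]]]))
     [:: PComp PSucc [:: PProj 0]; pcpair];
   PZero].
Lemma den_div a b xs : den pdiv (a :: b :: xs) = a %/ b.
Proof.
rewrite /= den_if /= den_bmu den_cpair. case: b => [|b]; first by rewrite divn0.
have E : forall s, (den (PComp plt [:: PComp pfst [:: PProj 1];
                  PComp pmul [:: PComp PSucc [:: PProj 0]; PComp psnd [:: PProj 1]]])
           [:: s; cpair a b.+1] != 0) = (a < s.+1 * b.+1).
  move=> s. by rewrite /= den_fst den_mul den_snd cfst_pair csnd_pair den_lt; case: (_ < _).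
rewrite (eq_bmu _ E). apply: bmu_eq.
- by rewrite ltn_ceil.
- move=> s Hs. rewrite -leqNgt. apply: leq_trans (leq_trunc_div a b.+1). exact: leq_mul.
- by rewrite ltnS leq_div.
Qed.
Global Opaque pdiv.
Definition pmod := PComp psub [:: PProj 0; PComp pmul [:: PProj 1; pdiv]].
Lemma den_mod a b xs : den pmod (a :: b :: xs) = a %% b.
Proof. by rewrite /= den_div den_mul den_sub {1}(divn_eq a b) mulnC addKn. Qed.
Global Opaque pmod.

Inductive ex : Type :=
| EV of nat | EK of nat
| EAdd of ex & ex | ESub of ex & ex | EMul of ex & ex
| ELt of ex & ex | EIf of ex & ex & ex
| EFst of ex | ESnd of ex | EPair of ex & ex
| ENth of ex & ex | ECDrop of ex & ex
| EPow of ex & ex | EDiv of ex & ex | EMod of ex & ex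
| ELet of ex & ex
| EMu of ex & ex
| EIter of ex & ex & ex
| ENot of ex | EAnd of ex & ex | EOr of ex & ex | EImp of ex & ex | EEq of ex & ex
| EEx of ex & ex | EAll of ex & ex.

Fixpoint eiter (a : nat) (st : nat -> nat -> nat) (k : nat) : nat :=
  match k with 0 => a | k'.+1 => st (eiter a st k') k' end.

Fixpoint eden (e : ex) (r : seq nat) : nat :=
  match e with
  | EV i => nth 0 r i
  | EK n => n
  | EAdd a b => eden a r + eden b r
  | ESub a b => eden a r - eden b r
  | EMul a b => eden a r * eden b r
  | ELt a b => eden a r < eden b r
  | EIf c a b => if eden c r != 0 then eden a r else eden b r
  | EFst a => cfst (eden a r)
  | ESnd a => csnd (eden a r)
  | EPair a b => cpair (eden a r) (eden b r)
  | ENth c i => cnth (eden c r) (eden i r)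
  | ECDrop i c => cdrop (eden i r) (eden c r)
  | EPow a b => eden a r ^ eden b r
  | EDiv a b => eden a r %/ eden b r
  | EMod a b => eden a r %% eden b r
  | ELet a body => eden body (eden a r :: r)
  | EMu b body => bmu (fun s => eden body (s :: r) != 0) (eden b r)
  | EIter n init step => eiter (eden init r) (fun acc k => eden step (acc :: k :: r)) (eden n r)
  | ENot a => eden a r == 0
  | EAnd a b => (eden a r != 0) && (eden b r != 0)
  | EOr a b => (eden a r != 0) || (eden b r != 0)
  | EImp a b => (eden a r != 0) ==> (eden b r != 0)
  | EEq a b => eden a r == eden b r
  | EEx b body => bmu (fun s => eden body (s :: r) != 0) (eden b r) < eden b r
  | EAll b body => ~~ (bmu (fun s => eden body (s :: r) == 0) (eden b r) < eden b r)
  end.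

Definition op2 p a b := PComp p [:: a; b].

Fixpoint cc (e : ex) : prog :=
  match e with
  | EV i => op2 pnth (PProj 0) (kp i)
  | EK n => kp n
  | EAdd a b => op2 padd (cc a) (cc b)
  | ESub a b => op2 psub (cc a) (cc b)
  | EMul a b => op2 pmul (cc a) (cc b)
  | ELt a b => op2 plt (cc a) (cc b)
  | EIf c a b => PComp pif [:: cc c; cc a; cc b]
  | EFst a => PComp pfst [:: cc a]
  | ESnd a => PComp psnd [:: cc a]
  | EPair a b => op2 pcpair (cc a) (cc b)
  | ENth c i => op2 pnth (cc c) (cc i)
  | ECDrop i c => op2 pdrop (cc i) (cc c)
  | EPow a b => op2 ppow (cc a) (cc b)
  | EDiv a b => op2 pdiv (cc a) (cc b)
  | EMod a b => op2 pmod (cc a) (cc b)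
  | ELet a body => PComp (cc body) [:: op2 ppush (cc a) (PProj 0)]
  | EMu b body => op2 (pbmu (PComp (cc body) [:: op2 ppush (PProj 0) (PProj 1)])) (cc b) (PProj 0)
  | EIter n init step =>
      op2 (PPrec (cc init) (PComp (cc step) [:: op2 ppush (PProj 1) (op2 ppush (PProj 0) (PProj 2))]))
          (cc n) (PProj 0)
  | ENot a => PComp pif [:: cc a; kp 0; kp 1]
  | EAnd a b => PComp pif [:: cc a; PComp psg [:: cc b]; kp 0]
  | EOr a b => PComp pif [:: cc a; kp 1; PComp psg [:: cc b]]
  | EImp a b => PComp pif [:: cc a; PComp psg [:: cc b]; kp 1]
  | EEq a b => PComp pif [:: op2 padd (op2 psub (cc a) (cc b)) (op2 psub (cc b) (cc a)); kp 0; kp 1]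
  | EEx b body => op2 plt (op2 (pbmu (PComp (cc body) [:: op2 ppush (PProj 0) (PProj 1)])) (cc b) (PProj 0)) (cc b)
  | EAll b body => PComp pif [:: op2 plt (op2 (pbmu (PComp pif [:: PComp (cc body) [:: op2 ppush (PProj 0) (PProj 1)]; kp 0; kp 1])) (cc b) (PProj 0)) (cc b); kp 0; kp 1]
  end.

Lemma cc_ok e : forall r, den (cc e) [:: enc_seq id r] = eden e r.
Proof.
elim: e => /=.
- move=> i r. by rewrite den_nth den_kp cnth_enc.
- move=> n r. by rewrite den_kp.
- move=> a IHa b IHb r. by rewrite den_add IHa IHb.
- move=> a IHa b IHb r. by rewrite den_sub IHa IHb.
- move=> a IHa b IHb r. by rewrite den_mul IHa IHb.
- move=> a IHa b IHb r. by rewrite den_lt IHa IHb.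
- move=> c IHc a IHa b IHb r. by rewrite den_if IHc IHa IHb.
- move=> a IHa r. by rewrite den_fst IHa.
- move=> a IHa r. by rewrite den_snd IHa.
- move=> a IHa b IHb r. by rewrite den_cpair IHa IHb.
- move=> a IHa b IHb r. by rewrite den_nth IHa IHb.
- move=> a IHa b IHb r. by rewrite den_drop IHa IHb.
- move=> a IHa b IHb r. by rewrite den_pow IHa IHb.
- move=> a IHa b IHb r. by rewrite den_div IHa IHb.
- move=> a IHa b IHb r. by rewrite den_mod IHa IHb.
- move=> a IHa b IHb r. by rewrite den_push IHa -IHb.
- move=> b IHb body IHbody r. rewrite den_bmu IHb. apply: eq_bmu => s.
  by rewrite /= den_push -IHbody.
- move=> n IHn i IHi st IHst r. rewrite IHn. elim: (eden n r) => [|k IH].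
  + by rewrite /= IHi.
  + by rewrite /= IH den_push den_push -IHst.
- move=> a IHa r. rewrite den_if IHa den_kp den_kp. by case: (eden a r).
- move=> a IHa b IHb r. rewrite den_if IHa /= den_sg IHb den_kp. by case: (eden a r).
- move=> a IHa b IHb r. rewrite den_if IHa /= den_sg IHb den_kp. by case: (eden a r).
- move=> a IHa b IHb r. rewrite den_if IHa /= den_sg IHb den_kp. by case: (eden a r).
- move=> a IHa b IHb r. rewrite den_if /= den_add !den_sub IHa IHb !den_kp.
  case: (eqVneq (eden a r) (eden b r)) => [->|H]; first by rewrite subnn.
  have : eden a r - eden b r + (eden b r - eden a r) != 0.
    rewrite addn_eq0 !subn_eq0 -eqn_leq. exact: H.
  by case: (_ + _).
- move=> b IHb body IHbody r. rewrite /= den_lt den_bmu IHb. congr (_ < _).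
  apply: eq_bmu => s. by rewrite /= den_push -IHbody.
- move=> b IHb body IHbody r. rewrite den_if /= den_lt den_bmu IHb !den_kp.
  rewrite (@eq_bmu _ (fun s => eden body (s :: r) == 0)).
  + by case: (_ < _).
  + move=> s. rewrite /= den_if den_push !den_kp. have := IHbody (s :: r). rewrite /= => ->. by case: (eden body _).
Qed.

Lemma mf_cc e : mufree (cc e).
Proof.
elim: e => //= *; repeat (apply/andP; split); try done; exact: mf_kp.
Qed.

Definition tr e r := eden e r != 0.

Fixpoint sem (e : ex) (r : seq nat) : Prop :=
  match e with
  | ENot a => ~ sem a r
  | EAnd a b => sem a r /\ sem b r
  | EOr a b => sem a r \/ sem b r
  | EImp a b => sem a r -> sem b r
  | EEq a b => eden a r = eden b r
  | ELt a b => eden a r < eden b r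
  | EEx b body => exists s, s < eden b r /\ sem body (s :: r)
  | EAll b body => forall s, s < eden b r -> sem body (s :: r)
  | _ => eden e r != 0
  end.

Lemma nb (b : bool) : (nat_of_bool b != 0) = b.
Proof. by case: b. Qed.

Lemma sem_ok e : forall r, tr e r <-> sem e r.
Proof.
rewrite /tr; elim: e => //=.
- move=> a _ b _ r. by rewrite nb.
- move=> a IHa r. rewrite nb. split => [/eqP H|H]; first by rewrite -IHa H.
  apply/eqP. case E: (eden a r) => [|n] //. exfalso; apply: H. by rewrite -IHa E.
- move=> a IHa b IHb r. rewrite nb -IHa -IHb. by split => [/andP|/andP].
- move=> a IHa b IHb r. rewrite nb -IHa -IHb. by split => [/orP|/orP].
- move=> a IHa b IHb r. rewrite nb -IHa -IHb. by split => [/implyP|/implyP].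
- move=> a _ b _ r. rewrite nb. by split => /eqP.
- move=> b _ body IH r. rewrite nb. split.
  + case: (ltnP (bmu (fun s => eden body (s :: r) != 0) (eden b r)) (eden b r)) => // H _.
    exists (bmu (fun s => eden body (s :: r) != 0) (eden b r)); split => //.
    rewrite -IH. exact: (bmu_lt H).
  + move=> [s [Hs Hb]]. rewrite -IH in Hb.
    case: (ltnP (bmu (fun s => eden body (s :: r) != 0) (eden b r)) (eden b r)) => // H.
    have := @bmu_min (fun s => eden body (s :: r) != 0) (eden b r) s.
    rewrite Hb. by move/(_ (leq_trans Hs H)).
- move=> b _ body IH r. rewrite nb. split.
  + move=> H s Hs. rewrite -IH. apply: contraR H => Hn. rewrite negbK in Hn.
    have := bmu_le (fun s => eden body (s :: r) == 0) (eden b r).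
    rewrite leq_eqVlt => /orP[/eqP E|//].
    have := @bmu_min (fun s => eden body (s :: r) == 0) (eden b r) s.
    by rewrite E => /(_ Hs); rewrite Hn.
  + move=> H. apply/negP => Hlt. have := bmu_lt Hlt. move: Hlt.
    set q := bmu _ _ => Hlt /eqP Hq. have := H q Hlt. by rewrite -IH Hq.
Qed.

Definition dex := nat -> ex.
Definition bv (d0 : nat) : dex := fun d => EV (Nat.sub d d0.+1).
Definition dAll (b : dex) (body : dex -> dex) : dex := fun d => EAll (b d) (body (bv d) d.+1).
Definition dEx (b : dex) (body : dex -> dex) : dex := fun d => EEx (b d) (body (bv d) d.+1).
Definition dAnd (a b : dex) : dex := fun d => EAnd (a d) (b d).
Definition dOr (a b : dex) : dex := fun d => EOr (a d) (b d).
Definition dImp (a b : dex) : dex := fun d => EImp (a d) (b d).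
Definition dNot (a : dex) : dex := fun d => ENot (a d).
Definition dEq (a b : dex) : dex := fun d => EEq (a d) (b d).
Definition dLt (a b : dex) : dex := fun d => ELt (a d) (b d).
Definition dIf (c a b : dex) : dex := fun d => EIf (c d) (a d) (b d).
Definition dK n : dex := fun _ => EK n.

(* instance layout: env at depth 0 is [:: w; x] *)
Definition W : dex := fun d => EV d.
Definition X : dex := fun d => EV d.+1.
Definition Lc : dex := fun d => EFst (X d).
Definition Ej (j : bool) : dex := fun d => (if j then EFst else ESnd) (ESnd (X d)).
Definition nj j : dex := fun d => EAdd (EFst (Ej j d)) (EK 1).
Definition Dj j : dex := fun d => EFst (ESnd (Ej j d)).
Definition Tbj j : dex := fun d => ESnd (ESnd (Ej j d)).
Definition KK : dex := nj false.
Definition NN j : dex := fun d => EPow (nj j d) (KK d).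
Definition mm : dex := fun d => EFst (W d).
Definition Sc : dex := fun d => ESnd (W d).
Definition node (t : dex) : dex := fun d => ENth (Sc d) (t d).
Definition val j (t r : dex) : dex :=
  fun d => ENth ((if j then EFst else ESnd) (EFst (node t d))) (r d).
Definition tag (t : dex) : dex := fun d => EFst (ESnd (node t d)).
Definition dat (t : dex) : dex := fun d => ESnd (ESnd (node t d)).
Definition digE (n r v : dex) : dex := fun d => EMod (EDiv (r d) (EPow (n d) (v d))) (n d).
Definition memE (y D : dex) : dex :=
  dEx D (fun i d => EAnd (EEq (ENth (D d) (i d)) (y d)) (ECDrop (i d) (D d))).
Definition allDes j (t : dex) : dex := dAll (NN j) (fun r => memE (val j t r) (Dj j)).
Definition tindexE j (k : dex) (arg : dex -> dex) : dex :=
  fun d => EIter (k d) (EK 0) (EAdd (EMul (EV 0) (nj j d.+2)) (arg (bv d) d.+2)).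
Definition tvE j (i k : dex) (arg : dex -> dex) : dex :=
  fun d => EMod (ENth (ENth (Tbj j d) (i d)) (tindexE j k arg d)) (nj j d).
Definition arity (i : dex) : dex := fun d => ENth (Lc d) (i d).
Definition inL (i : dex) : dex := fun d => ECDrop (i d) (Lc d).
Definition eqbeh j (t : dex) (f : dex -> dex) : dex := dAll (NN j) (fun r => dEq (val j t r) (f r)).
Definition bothbeh (t : dex) (f : bool -> dex -> dex) : dex :=
  dAnd (eqbeh true t (f true)) (eqbeh false t (f false)).

Definition G1 : dex := dAll KK (fun v => dEx mm (fun t =>
   bothbeh t (fun j r => digE (nj j) r v))).
Definition G2 : dex := dAll Lc (fun i => dImp (inL i)
   (dAll (fun d => EPow (mm d) (arity i d)) (fun u => dEx mm (fun t =>
      bothbeh t (fun j r => tvE j i (arity i) (fun l => val j (digE mm u l) r)))))).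
Definition G3 : dex := dAll mm (fun t => dImp (allDes true t) (allDes false t)).
Definition Good : dex := dAnd G1 (dAnd G2 G3).

Definition Valid (t : dex) : dex :=
  dOr (dAnd (dEq (tag t) (dK 0))
        (dAnd (dLt (dat t) KK) (bothbeh t (fun j r => digE (nj j) r (dat t)))))
      (dAnd (dNot (dEq (tag t) (dK 0)))
        (dAnd (inL (fun d => ESub (tag t d) (EK 1)))
          (dAnd (dAll (arity (fun d => ESub (tag t d) (EK 1))) (fun l => dLt (fun d => ENth (dat t d) (l d)) t))
            (bothbeh t (fun j r => tvE j (fun d => ESub (tag t d) (EK 1))
                                         (arity (fun d => ESub (tag t d) (EK 1)))
                                         (fun l => val j (fun d => ENth (dat t d) (l d)) r)))))).
Definition Bad : dex := dAnd (dAll mm Valid)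
   (dEx mm (fun t => dAnd (allDes true t) (dNot (allDes false t)))).



Definition vl w (j : bool) t r := cnth ((if j then cfst else csnd) (cfst (cnth (csnd w) t))) r.
Definition tagc w t := cfst (csnd (cnth (csnd w) t)).
Definition datc w t := csnd (csnd (cnth (csnd w) t)).
Definition asgd n r v := r %/ n ^ v %% n.
Definition memc y D := exists i, i < D /\ cnth D i = y /\ cdrop i D != 0.
Definition tvc n Tb i (g : nat -> nat) k :=
  cnth (cnth Tb i) (eiter 0 (fun acc l => acc * n + g l) k) %% n.

Definition RGoodP w Lc nv1 D1 Tb1 nv2 (D2 : nat) Tb2 :=
 (forall v, v < nv2 + 1 -> exists t, t < cfst w /\
    (forall r, r < (nv1 + 1) ^ (nv2 + 1) -> vl w true t r = asgd (nv1 + 1) r v) /\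
    (forall r, r < (nv2 + 1) ^ (nv2 + 1) -> vl w false t r = asgd (nv2 + 1) r v)) /\
 ((forall i, i < Lc -> cdrop i Lc != 0 -> forall u, u < cfst w ^ cnth Lc i ->
    exists t, t < cfst w /\
    (forall r, r < (nv1 + 1) ^ (nv2 + 1) ->
       vl w true t r = tvc (nv1 + 1) Tb1 i (fun l => vl w true (asgd (cfst w) u l) r) (cnth Lc i)) /\
    (forall r, r < (nv2 + 1) ^ (nv2 + 1) ->
       vl w false t r = tvc (nv2 + 1) Tb2 i (fun l => vl w false (asgd (cfst w) u l) r) (cnth Lc i))) /\
  (forall t, t < cfst w ->
    (forall r, r < (nv1 + 1) ^ (nv2 + 1) -> memc (vl w true t r) D1) ->
    (forall r, r < (nv2 + 1) ^ (nv2 + 1) -> memc (vl w false t r) D2))).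

Definition RValidP w t Lc nv1 Tb1 nv2 Tb2 :=
  (tagc w t = 0 /\ (datc w t < nv2 + 1 /\
     (forall r, r < (nv1 + 1) ^ (nv2 + 1) -> vl w true t r = asgd (nv1 + 1) r (datc w t)) /\
     (forall r, r < (nv2 + 1) ^ (nv2 + 1) -> vl w false t r = asgd (nv2 + 1) r (datc w t)))) \/
  (~ tagc w t = 0 /\ (cdrop (tagc w t - 1) Lc != 0 /\
     ((forall l, l < cnth Lc (tagc w t - 1) -> cnth (datc w t) l < t) /\
      ((forall r, r < (nv1 + 1) ^ (nv2 + 1) ->
         vl w true t r = tvc (nv1 + 1) Tb1 (tagc w t - 1)
            (fun l => vl w true (cnth (datc w t) l) r) (cnth Lc (tagc w t - 1))) /\
       (forall r, r < (nv2 + 1) ^ (nv2 + 1) ->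
         vl w false t r = tvc (nv2 + 1) Tb2 (tagc w t - 1)
            (fun l => vl w false (cnth (datc w t) l) r) (cnth Lc (tagc w t - 1))))))).

Definition RBadP w Lc nv1 D1 Tb1 nv2 (D2 : nat) Tb2 :=
  (forall t, t < cfst w -> RValidP w t Lc nv1 Tb1 nv2 Tb2) /\
  (exists t, t < cfst w /\
    ((forall r, r < (nv1 + 1) ^ (nv2 + 1) -> memc (vl w true t r) D1) /\
     ~ (forall r, r < (nv2 + 1) ^ (nv2 + 1) -> memc (vl w false t r) D2))).

Definition xparams (P : nat -> nat -> nat -> nat -> nat -> nat -> nat -> Prop) x :=
  P (cfst x) (cfst (cfst (csnd x))) (cfst (csnd (cfst (csnd x)))) (csnd (csnd (cfst (csnd x))))
    (cfst (csnd (csnd x))) (cfst (csnd (csnd (csnd x)))) (csnd (csnd (csnd (csnd x)))).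

Lemma Good_iff w x : tr (Good 0) [:: w; x] <-> xparams (RGoodP w) x.
Proof.
rewrite sem_ok. Time (simpl). Time reflexivity.
Qed.

Lemma Bad_iff w x : tr (Bad 0) [:: w; x] <-> xparams (RBadP w) x.
Proof.
rewrite sem_ok. Time (simpl). Time reflexivity.
Qed.

Definition form_ind' (P : form -> Prop) (HV : forall n, P (Var n))
  (HA : forall i args, (forall a, List.In a args -> P a) -> P (App i args)) : forall f, P f :=
  fix F f := match f with
  | Var n => HV n
  | App i args => HA i args
      ((fix G (s : seq form) : forall a, List.In a s -> P a :=
         match s with
         | [::] => fun a (H : List.In a [::]) => match H with end
         | b :: s' => fun a H => match H with
                      | or_introl e => eq_ind b P (F b) a e
                      | or_intror h => G s' a h end
         end) args)
  end.

Lemma feval_App M v i args : feval M v (App i args) = truth_fun M i (map (feval M v) args).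
Proof. rewrite /=; congr truth_fun; by elim: args => //= a s ->. Qed.

Lemma wf_App L i args : wf L (App i args) = [&& i < size L, size args == nth 0 L i & all (wf L) args].
Proof. rewrite /=; congr [&& _, _ & _]; by elim: args => //= a s ->. Qed.

Fixpoint varsb (K : nat) (f : form) : bool :=
  match f with Var n => n < K | App _ args => all (varsb K) args end.

Fixpoint ren (g : nat -> nat) (f : form) : form :=
  match f with Var n => Var (g n) | App i args => App i (map (ren g) args) end.

Lemma map_In (A B : Type) (f g : A -> B) s : (forall a, List.In a s -> f a = g a) -> map f s = map g s.
Proof. elim: s => //= a s IH H. rewrite H; last by left. by rewrite IH // => b hb; apply: H; right. Qed.

Lemma allIn (A : Type) (p : pred A) s : all p s <-> (forall a, List.In a s -> p a).
Proof.
elim: s => //= a s IH. split.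
- move=> /andP[pa ps] b [<-|h] //. by apply IH.
- move=> H. apply/andP; split; first by apply: H; left. apply/IH => b h; apply: H; by right.
Qed.

Lemma ren_App g i args : ren g (App i args) = App i (map (ren g) args).
Proof. by []. Qed.

Lemma feval_ren M v g f : feval M v (ren g f) = feval M (v \o g) f.
Proof.
elim/form_ind': f => // i args IH. rewrite ren_App !feval_App -map_comp. congr truth_fun.
exact: map_In.
Qed.

Lemma wf_ren L g f : wf L (ren g f) = wf L f.
Proof.
elim/form_ind': f => // i args IH. rewrite ren_App !wf_App size_map all_map. congr [&& _, _ & _].
elim: args IH => //= a s IHs H. rewrite H; last by left. by rewrite IHs // => b hb; apply: H; right.
Qed.

Lemma varsb_ren K g f : (forall n, g n < K) -> varsb K (ren g f).
Proof.
move=> Hg. elim/form_ind': f => //= i args IH. rewrite all_map. apply/allIn => a h. exact: IH.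
Qed.

Lemma feval_ext M K u v f : varsb K f -> (forall j, j < K -> u j = v j) -> feval M u f = feval M v f.
Proof.
move=> Hf Huv. elim/form_ind': f Hf => [n /= Hn|i args IH]; first exact: Huv.
move=> Ha; have /allIn {}Ha : all (varsb K) args := Ha. rewrite !feval_App. congr truth_fun. apply: map_In => a h. apply: IH => //. exact: Ha.
Qed.

Lemma feval_eqv M u v f : (forall j, u j = v j) -> feval M u f = feval M v f.
Proof.
move=> Huv. elim/form_ind': f => [n|i args IH]; first exact: Huv.
rewrite !feval_App. congr truth_fun. exact: map_In.
Qed.

Lemma asgd_lt n r v : 0 < n -> asgd n r v < n.
Proof. move=> Hn. by rewrite /asgd ltn_pmod. Qed.

Lemma asgd_surj n K (u : nat -> nat) : 0 < n -> (forall j, j < K -> u j < n) ->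
  exists r, r < n ^ K /\ forall j, j < K -> asgd n r j = u j.
Proof.
move=> Hn. elim: K => [|K IH] Hu.
- by exists 0.
- have [r [Hr Hj]] := IH (fun j hj => Hu j (ltnW hj)).
  exists (u K * n ^ K + r); split.
  + rewrite expnS. have HuK := Hu K (ltnSn K).
    apply: leq_trans (_ : (u K).+1 * n ^ K <= _).
    * by rewrite mulSn [n ^ K + _]addnC ltn_add2l.
    * by rewrite leq_mul2r HuK orbT.
  + move=> j; rewrite ltnS leq_eqVlt => /orP[/eqP ->|Hjk].
    * rewrite /asgd divnMDl ?expn_gt0 ?Hn // divn_small // addn0 modn_small //. exact: Hu.
    * have E : n ^ K = n ^ (K - j).-1 * n * n ^ j.
        by rewrite -expnSr prednK ?subn_gt0 // -expnD subnK // ltnW.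
      rewrite /asgd E !mulnA divnMDl ?expn_gt0 ?Hn // modnMDl. exact: Hj.
Qed.

Definition LC (L : language) := enc_seq id L.
Definition DC (M : logic) := enc_seq id (des M).
Definition TC (M : logic) := enc_seq (enc_seq id) (tab M).

Lemma xparams_inst P L M1 M2 : xparams P (enc_inst L M1 M2) =
  P (LC L) (nv M1) (DC M1) (TC M1) (nv M2) (DC M2) (TC M2).
Proof. by rewrite /xparams /enc_inst /enc_logic !cfst_pair !csnd_pair !cfst_pair !csnd_pair !cfst_pair. Qed.

Lemma enc_size s : size s <= enc_seq id s.
Proof. elim: s => //= x s IH. rewrite ltnS. apply: leq_trans IH _. rewrite /cpair. exact: leq_addl. Qed.

Lemma cdrop_size i s : (cdrop i (enc_seq id s) != 0) = (i < size s).
Proof.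
rewrite cdrop_enc. case: (ltnP i (size s)) => H.
- have : 0 < size (drop i s) by rewrite size_drop subn_gt0.
  by case: (drop i s).
- by rewrite drop_oversize.
Qed.

Lemma memc_enc y s : memc y (enc_seq id s) <-> y \in s.
Proof.
split.
- move=> [i [Hi [Hn Hd]]]. rewrite cdrop_size in Hd. rewrite cnth_enc in Hn. by rewrite -Hn mem_nth.
- move=> Hy. exists (index y s); split; last split.
  + apply: leq_trans (enc_size s). by rewrite index_mem.
  + by rewrite cnth_enc nth_index.
  + by rewrite cdrop_size index_mem.
Qed.

Lemma enc_seq_map (T : Type) (e : T -> nat) s : enc_seq e s = enc_seq id (map e s).
Proof. by elim: s => //= x s ->. Qed.

Lemma eiter_tindex n (g : nat -> nat) k :
  eiter 0 (fun acc l => acc * n + g l) k = tindex n [seq g l | l <- iota 0 k].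
Proof.
elim: k => // k IH. rewrite [eiter _ _ _]/= IH. have -> : [seq g l | l <- iota 0 k.+1] = mkseq g k.+1 by [].
by rewrite mkseqS /tindex foldl_rcons.
Qed.

Lemma cnth_TC M i : cnth (TC M) i = enc_seq id (nth [::] (tab M) i).
Proof.
rewrite /TC enc_seq_map cnth_enc. case: (ltnP i (size (tab M))) => H.
- by rewrite (nth_map [::]).
- by rewrite !nth_default ?size_map.
Qed.

Lemma tvc_tf M i g k : tvc (nv M + 1) (TC M) i g k = truth_fun M i [seq g l | l <- iota 0 k].
Proof. by rewrite /tvc eiter_tindex cnth_TC cnth_enc /truth_fun /nvals addn1. Qed.

Lemma map_nth_all (T : Type) (x0 : T) (f : T -> nat) s :
  [seq f (nth x0 s l) | l <- iota 0 (size s)] = map f s.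
Proof. by rewrite (map_comp f (nth x0 s)) map_nth_iota0 // take_size. Qed.

Lemma list_choice (P : form -> nat -> Prop) args :
  (forall a, List.In a args -> exists t, P a t) ->
  exists ts, size ts = size args /\ forall l, l < size args -> P (nth (Var 0) args l) (nth 0 ts l).
Proof.
elim: args => [|a s IH] H; first by exists [::].
have [t Ht] := H a (or_introl erefl).
have [ts [Hs Hts]] := IH (fun b h => H b (or_intror h)).
exists (t :: ts); split; first by rewrite /= Hs.
by case=> [|l] //= Hl; apply: Hts.
Qed.

Lemma nth_In (x0 : form) s l : l < size s -> List.In (nth x0 s l) s.
Proof. elim: s l => [|a s IH] [|l] //= Hl; [by left | right; exact: IH]. Qed.

Lemma fin_choice (P : nat -> nat -> Prop) k :
  (forall l, l < k -> exists t, P l t) -> exists g : nat -> nat, forall l, l < k -> P l (g l).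
Proof.
elim: k => [|k IH] H; first by exists (fun _ => 0).
have [g Hg] := IH (fun l hl => H l (ltnW hl)).
have [t Ht] := H k (ltnSn k).
exists (fun l => if l == k then t else g l) => l; rewrite ltnS leq_eqVlt => /orP[/eqP ->|Hl].
- by rewrite eqxx.
- by rewrite (ltn_eqF Hl); apply: Hg.
Qed.

Definition Qinc L M1 M2 := forall phi, Taut L M1 phi -> Taut L M2 phi.

Lemma good_real w L M1 M2 :
  RGoodP w (LC L) (nv M1) (DC M1) (TC M1) (nv M2) (DC M2) (TC M2) ->
  forall f, wf L f -> varsb (nv M2 + 1) f -> exists t, t < cfst w /\
   (forall r, r < (nv M1 + 1) ^ (nv M2 + 1) -> vl w true t r = feval M1 (asgd (nv M1 + 1) r) f) /\
   (forall r, r < (nv M2 + 1) ^ (nv M2 + 1) -> vl w false t r = feval M2 (asgd (nv M2 + 1) r) f).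
Proof.
move=> [G1 [G2 G3]]. elim/form_ind'.
- move=> n _ Hn. exact: G1.
- move=> i args IH Hwf Hv.
  have /allIn Hva : all (varsb (nv M2 + 1)) args := Hv.
  move: Hwf; rewrite wf_App => /and3P[HiL /eqP Hsz /allIn Hwa].
  have [ts [Hts Hp]] := list_choice (fun a h => IH a h (Hwa a h) (Hva a h)).
  have Hm : 0 < cfst w.
    have [t [Ht _]] := G1 0 (eq_ind_r (fun z => 0 < z) (ltn0Sn (nv M2)) (addn1 _)). exact: leq_ltn_trans (leq0n _) Ht.
  have [u [Hu Hdig]] := @asgd_surj (cfst w) (size args) (fun l => nth 0 ts l) Hm
     (fun l hl => proj1 (Hp l hl)).
  have HiLC : i < LC L by apply: leq_trans HiL (enc_size L).
  have Hdr : cdrop i (LC L) != 0 by rewrite cdrop_size.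
  have Har : cnth (LC L) i = size args by rewrite cnth_enc Hsz.
  rewrite -Har in Hu.
  have [t [Ht [H1 H2]]] := G2 i HiLC Hdr u Hu.
  exists t; split => //; split => r Hr.
  + rewrite H1 // tvc_tf feval_App Har -(map_nth_all (Var 0) (feval M1 _) args). congr truth_fun.
    apply/eq_in_map => l; rewrite mem_iota add0n => /andP[_ Hl].
    rewrite Hdig //. case: (Hp l Hl) => _ [H3 _]. exact: H3.
  + rewrite H2 // tvc_tf feval_App Har -(map_nth_all (Var 0) (feval M2 _) args). congr truth_fun.
    apply/eq_in_map => l; rewrite mem_iota add0n => /andP[_ Hl].
    rewrite Hdig //. case: (Hp l Hl) => _ [_ H3]. exact: H3.
Qed.

Lemma good_sound w L M1 M2 :
  RGoodP w (LC L) (nv M1) (DC M1) (TC M1) (nv M2) (DC M2) (TC M2) -> Qinc L M1 M2.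
Proof.
move=> HG phi [Hwf H1]. split => // v Hv.
have Hvk : forall n, v n < nv M2 + 1 by move=> n; rewrite addn1; exact: Hv.
have Hwf2 : wf L (ren v phi) by rewrite wf_ren.
have [t [Ht [E1 E2]]] := good_real HG Hwf2 (varsb_ren _ Hvk).
case: HG => _ [_ G3].
have D1 : forall r, r < (nv M1 + 1) ^ (nv M2 + 1) -> memc (vl w true t r) (DC M1).
  move=> r Hr. rewrite E1 // feval_ren memc_enc. apply: H1 => n. rewrite /comp.
  rewrite /nvals. have := @asgd_lt (nv M1 + 1) r (v n). rewrite addn1. by apply.
have D2 := G3 t Ht D1.
have Kpos : 0 < nv M2 + 1 by rewrite addn1.
have [r0 [Hr0 Hid]] := @asgd_surj (nv M2 + 1) (nv M2 + 1) id Kpos (fun j hj => hj).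
have := D2 r0 Hr0. rewrite E2 // feval_ren memc_enc.
have -> : feval M2 (asgd (nv M2 + 1) r0 \o v) phi = feval M2 v phi.
  apply: feval_eqv => n /=. exact: Hid (Hvk n).
by [].
Qed.

Lemma fin_choiceT (T : Type) (x0 : T) (P : nat -> T -> Prop) k :
  (forall l, l < k -> exists t, P l t) -> exists g : nat -> T, forall l, l < k -> P l (g l).
Proof.
elim: k => [|k IH] H; first by exists (fun _ => x0).
have [g Hg] := IH (fun l hl => H l (ltnW hl)).
have [t Ht] := H k (ltnSn k).
exists (fun l => if l == k then t else g l) => l; rewrite ltnS leq_eqVlt => /orP[/eqP ->|Hl].
- by rewrite eqxx.
- by rewrite (ltn_eqF Hl); apply: Hg.
Qed.

Lemma bad_real w L M1 M2 :
  (forall t, t < cfst w -> RValidP w t (LC L) (nv M1) (TC M1) (nv M2) (TC M2)) ->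
  forall t, t < cfst w -> exists f, wf L f /\ varsb (nv M2 + 1) f /\
   (forall r, r < (nv M1 + 1) ^ (nv M2 + 1) -> vl w true t r = feval M1 (asgd (nv M1 + 1) r) f) /\
   (forall r, r < (nv M2 + 1) ^ (nv M2 + 1) -> vl w false t r = feval M2 (asgd (nv M2 + 1) r) f).
Proof.
move=> HV. elim/ltn_ind => t IH Ht.
case: (HV t Ht) => [[Htag [Hd [E1 E2]]] | [Htag [Hdr [Hargs [E1 E2]]]]].
- exists (Var (datc w t)); split => //; split => //.
- set i := tagc w t - 1 in Hdr Hargs E1 E2.
  set k := cnth (LC L) i in Hargs E1 E2.
  have [g Hg] := @fin_choiceT form (Var 0) _ k (fun l hl =>
     IH (cnth (datc w t) l) (Hargs l hl) (ltn_trans (Hargs l hl) Ht)).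
  exists (App i [seq g l | l <- iota 0 k]).
  have HiL : i < size L by rewrite -cdrop_size.
  have Hk : k = nth 0 L i by rewrite /k cnth_enc.
  split; last split; last split.
  + rewrite wf_App HiL size_map size_iota -Hk eqxx /= all_map. apply/allP => l.
    rewrite mem_iota add0n => /andP[_ Hl] /=. by case: (Hg l Hl).
  + rewrite /= all_map. apply/allP => l. rewrite mem_iota add0n => /andP[_ Hl] /=. by case: (Hg l Hl) => _ [].
  + move=> r Hr. rewrite E1 // tvc_tf feval_App -map_comp. congr truth_fun.
    apply/eq_in_map => l; rewrite mem_iota add0n => /andP[_ Hl] /=.
    case: (Hg l Hl) => _ [_ [H3 _]]. exact: H3.
  + move=> r Hr. rewrite E2 // tvc_tf feval_App -map_comp. congr truth_fun.
    apply/eq_in_map => l; rewrite mem_iota add0n => /andP[_ Hl] /=.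
    case: (Hg l Hl) => _ [_ [_ H3]]. exact: H3.
Qed.

Lemma bad_sound w L M1 M2 :
  RBadP w (LC L) (nv M1) (DC M1) (TC M1) (nv M2) (DC M2) (TC M2) -> ~ Qinc L M1 M2.
Proof.
move=> [HV [t [Ht [D1 ND2]]]] HQ.
have [f [Hwf [Hvb [E1 E2]]]] := bad_real HV Ht.
have T1 : Taut L M1 f.
  split => // u Hu.
  have n1pos : 0 < nv M1 + 1 by rewrite addn1.
  have [r [Hr Hj]] := @asgd_surj (nv M1 + 1) (nv M2 + 1) u n1pos
     (fun j _ => eq_ind_r (fun z => u j < z) (Hu j) (addn1 _)).
  rewrite (@feval_ext M1 _ _ (asgd (nv M1 + 1) r) _ Hvb); last by move=> j hj; rewrite Hj.
  rewrite -E1 //. rewrite /designated -memc_enc. exact: D1.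
have [_ T2] := HQ f T1.
apply: ND2 => r Hr. rewrite E2 // memc_enc. apply: T2 => n.
rewrite /nvals. have := @asgd_lt (nv M2 + 1) r n. rewrite addn1. by apply.
Qed.

Record DN := MkDN { tg : nat; dc : nat; f1 : nat -> nat; f2 : nat -> nat }.
Definition dn0 := MkDN 0 0 (fun _ => 0) (fun _ => 0).
Definition fj (j : bool) (e : DN) := if j then f1 e else f2 e.

Definition njj (M1 M2 : logic) (j : bool) := if j then nv M1 + 1 else nv M2 + 1.
Definition Mjj (M1 M2 : logic) (j : bool) := if j then M1 else M2.
Definition Njj (M1 M2 : logic) (j : bool) := njj M1 M2 j ^ (nv M2 + 1).

Definition DValid L M1 M2 (d : seq DN) t :=
  let e := nth dn0 d t in
  (tg e = 0 /\ dc e < nv M2 + 1 /\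
     forall j r, r < Njj M1 M2 j -> fj j e r = asgd (njj M1 M2 j) r (dc e)) \/
  (tg e <> 0 /\ tg e - 1 < size L /\
     (forall l, l < nth 0 L (tg e - 1) -> cnth (dc e) l < t) /\
     forall j r, r < Njj M1 M2 j -> fj j e r =
        truth_fun (Mjj M1 M2 j) (tg e - 1)
          [seq fj j (nth dn0 d (cnth (dc e) l)) r | l <- iota 0 (nth 0 L (tg e - 1))]).

Definition valid L M1 M2 d := forall t, t < size d -> DValid L M1 M2 d t.

Definition key M1 M2 (e : DN) := (mkseq (f1 e) (Njj M1 M2 true), mkseq (f2 e) (Njj M1 M2 false)).
Definition cnt M1 M2 d := size (undup (map (key M1 M2) d)).

Lemma DValid_rcons L M1 M2 d e t : t < size d -> DValid L M1 M2 (rcons d e) t <-> DValid L M1 M2 d t.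
Proof.
move=> Ht. rewrite /DValid nth_rcons Ht.
set x := nth dn0 d t.
have E : forall l, cnth (dc x) l < t -> nth dn0 (rcons d e) (cnth (dc x) l) = nth dn0 d (cnth (dc x) l).
  move=> l Hl. by rewrite nth_rcons (ltn_trans Hl Ht).
split => [[H|[H1 [H2 [H3 H4]]]]|[H|[H1 [H2 [H3 H4]]]]]; try by left.
- right; split; [done|split; [done|split; [done|]]] => j r Hr. rewrite H4 //. congr truth_fun.
  apply/eq_in_map => l; rewrite mem_iota add0n => /andP[_ Hl]. by rewrite E // H3.
- right; split; [done|split; [done|split; [done|]]] => j r Hr. rewrite H4 //. congr truth_fun.
  apply/eq_in_map => l; rewrite mem_iota add0n => /andP[_ Hl]. by rewrite E // H3.
Qed.

Lemma valid_rcons L M1 M2 d e : valid L M1 M2 d -> DValid L M1 M2 (rcons d e) (size d) ->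
  valid L M1 M2 (rcons d e).
Proof.
move=> Hv Hn t. rewrite size_rcons ltnS leq_eqVlt => /orP[/eqP ->|Ht] //.
rewrite DValid_rcons //. exact: Hv.
Qed.

Lemma size_undup_rcons (T : eqType) (s : seq T) x : x \notin s ->
  size (undup (rcons s x)) = (size (undup s)).+1.
Proof.
elim: s => [|y s IH] //=. rewrite in_cons negb_or => /andP[Hxy Hxs].
rewrite mem_rcons in_cons eq_sym (negbTE Hxy) /=. by case: (y \in s) => /=; rewrite IH.
Qed.

Fixpoint allseqs (n N : nat) : seq (seq nat) :=
  match N with
  | 0 => [:: [::]]
  | N'.+1 => [seq x :: s | x <- iota 0 n, s <- allseqs n N']
  end.

Lemma mem_allseqs n s : all (fun x => x < n) s -> s \in allseqs n (size s).
Proof.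
elim: s => [|x s IH] //= /andP[Hx Hs]. apply: (allpairs_f (fun x s => x :: s)).
- by rewrite mem_iota.
- exact: IH.
Qed.

Lemma mem_allseqs' n N s : size s = N -> all (fun x => x < n) s -> s \in allseqs n N.
Proof. move=> <-; exact: mem_allseqs. Qed.

Lemma fvals_lt L M1 M2 d t j r : valid L M1 M2 d -> t < size d -> r < Njj M1 M2 j ->
  fj j (nth dn0 d t) r < njj M1 M2 j.
Proof.
move=> Hv Ht Hr. case: (Hv t Ht) => [[_ [_ H]]|[_ [_ [_ H]]]]; rewrite H //.
- apply: asgd_lt. by case: j {Hr H}; rewrite /njj addn1.
- rewrite /truth_fun /nvals. have -> : njj M1 M2 j = nvals (Mjj M1 M2 j) by case: j {Hr H}; rewrite /njj /nvals addn1.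
  by rewrite ltn_pmod.
Qed.

Definition FS M1 M2 := [seq (a, b) | a <- allseqs (njj M1 M2 true) (Njj M1 M2 true),
                                     b <- allseqs (njj M1 M2 false) (Njj M1 M2 false)].

Lemma map_idx (T1 T2 : Type) (x0 : T1) (f : T1 -> T2) s :
  map f s = [seq f (nth x0 s t) | t <- iota 0 (size s)].
Proof. by rewrite (map_comp f (nth x0 s)) map_nth_iota0 // take_size. Qed.

Lemma cnt_bound L M1 M2 d : valid L M1 M2 d -> cnt M1 M2 d <= size (FS M1 M2).
Proof.
move=> Hv. apply: uniq_leq_size; first exact: undup_uniq.
move=> k; rewrite mem_undup (map_idx dn0) => /mapP [t].
rewrite mem_iota add0n => /andP[_ Ht] ->.
apply: allpairs_f.
- apply: mem_allseqs'; first by rewrite size_mkseq.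
  apply/allP => x /mapP [r]. rewrite mem_iota add0n => /andP[_ Hr] ->.
  exact: (@fvals_lt L M1 M2 d t true r Hv Ht Hr).
- apply: mem_allseqs'; first by rewrite size_mkseq.
  apply/allP => x /mapP [r]. rewrite mem_iota add0n => /andP[_ Hr] ->.
  exact: (@fvals_lt L M1 M2 d t false r Hv Ht Hr).
Qed.

Lemma max_deriv L M1 M2 : exists d, valid L M1 M2 d /\ forall d', valid L M1 M2 d' -> cnt M1 M2 d' <= cnt M1 M2 d.
Proof.
apply: NNPP => Hno.
have step : forall d, valid L M1 M2 d -> exists d', valid L M1 M2 d' /\ cnt M1 M2 d < cnt M1 M2 d'.
  move=> d Hd. have := not_ex_all_not _ _ Hno d. move/not_and_or => [H|]; first by case: (H Hd).
  move/not_all_ex_not => [d' Hd']. have [Hv' Hc] := imply_to_and _ _ Hd'.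
  exists d'; split => //. by rewrite ltnNge; apply/negP.
have : forall k, exists d, valid L M1 M2 d /\ k <= cnt M1 M2 d.
  elim=> [|k [d [Hd Hk]]]; first by exists [::]; split => // t.
  have [d' [Hd' Hc]] := step d Hd. exists d'; split => //. exact: leq_ltn_trans Hk Hc.
move=> /(_ (size (FS M1 M2)).+1) [d [Hd Hk]].
have := cnt_bound Hd. by rewrite leqNgt Hk.
Qed.

Lemma absorb L M1 M2 D e : valid L M1 M2 D ->
  (forall d', valid L M1 M2 d' -> cnt M1 M2 d' <= cnt M1 M2 D) ->
  DValid L M1 M2 (rcons D e) (size D) ->
  exists t, t < size D /\ forall j r, r < Njj M1 M2 j -> fj j (nth dn0 D t) r = fj j e r.
Proof.
move=> HvD Hmax He. have Hv' := valid_rcons HvD He.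
have Hc := Hmax _ Hv'.
have Hin : key M1 M2 e \in map (key M1 M2) D.
  apply: contraLR Hc => Hn. rewrite -ltnNge /cnt map_rcons size_undup_rcons //.
move: Hin; rewrite (map_idx dn0) => /mapP [t]. rewrite mem_iota add0n => /andP[_ Ht] Ek.
exists t; split => // j r Hr. move: Ek; rewrite /key => -[E1 E2].
case: j Hr => Hr /=.
- by rewrite -(nth_mkseq 0 (f1 e) Hr) E1 nth_mkseq.
- by rewrite -(nth_mkseq 0 (f2 e) Hr) E2 nth_mkseq.
Qed.

Definition ecode M1 M2 (e : DN) :=
  cpair (cpair (enc_seq id (mkseq (f1 e) (Njj M1 M2 true))) (enc_seq id (mkseq (f2 e) (Njj M1 M2 false))))
        (cpair (tg e) (dc e)).
Definition wenc M1 M2 D := cpair (size D) (enc_seq id (map (ecode M1 M2) D)).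

Lemma wenc_fst M1 M2 D : cfst (wenc M1 M2 D) = size D.
Proof. by rewrite /wenc cfst_pair. Qed.

Lemma wenc_node M1 M2 D t : t < size D -> cnth (csnd (wenc M1 M2 D)) t = ecode M1 M2 (nth dn0 D t).
Proof. move=> Ht. by rewrite /wenc csnd_pair cnth_enc (nth_map dn0). Qed.

Lemma wenc_vl M1 M2 D j t r : t < size D -> r < Njj M1 M2 j ->
  vl (wenc M1 M2 D) j t r = fj j (nth dn0 D t) r.
Proof.
move=> Ht Hr. rewrite /vl wenc_node // /ecode cfst_pair.
case: j Hr => Hr /=; rewrite ?cfst_pair ?csnd_pair cnth_enc nth_mkseq //.
Qed.

Lemma wenc_tag M1 M2 D t : t < size D -> tagc (wenc M1 M2 D) t = tg (nth dn0 D t).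
Proof. move=> Ht. by rewrite /tagc wenc_node // /ecode csnd_pair cfst_pair. Qed.
Lemma wenc_dat M1 M2 D t : t < size D -> datc (wenc M1 M2 D) t = dc (nth dn0 D t).
Proof. move=> Ht. by rewrite /datc wenc_node // /ecode !csnd_pair. Qed.

Lemma compl_G1 L M1 M2 D : valid L M1 M2 D ->
  (forall d', valid L M1 M2 d' -> cnt M1 M2 d' <= cnt M1 M2 D) ->
  forall v, v < nv M2 + 1 -> exists t, t < size D /\
    forall j r, r < Njj M1 M2 j -> fj j (nth dn0 D t) r = asgd (njj M1 M2 j) r v.
Proof.
move=> HvD Hmax v Hv.
pose e := MkDN 0 v (fun r => asgd (nv M1 + 1) r v) (fun r => asgd (nv M2 + 1) r v).
have He : DValid L M1 M2 (rcons D e) (size D).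
  rewrite /DValid nth_rcons ltnn eqxx. left; split => //; split => // j r Hr. by case: j {Hr}.
have [t [Ht Et]] := absorb HvD Hmax He.
exists t; split => // j r Hr. rewrite Et //. by case: j {Hr Et}.
Qed.

Lemma RValid_of L M1 M2 D t : valid L M1 M2 D -> t < size D ->
  RValidP (wenc M1 M2 D) t (LC L) (nv M1) (TC M1) (nv M2) (TC M2).
Proof.
move=> HvD Ht. rewrite /RValidP wenc_tag // wenc_dat //.
case: (HvD t Ht) => [[H1 [H2 H3]]|[H1 [H2 [H3 H4]]]].
- left; split => //; split => //; split => r Hr; rewrite wenc_vl //.
  + exact: (H3 true r Hr).
  + exact: (H3 false r Hr).
- right; split => //. rewrite cdrop_size cnth_enc; split => //; split => //.
  have Ea : forall j l r, l < nth 0 L (tg (nth dn0 D t) - 1) -> r < Njj M1 M2 j ->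
     vl (wenc M1 M2 D) j (cnth (dc (nth dn0 D t)) l) r = fj j (nth dn0 D (cnth (dc (nth dn0 D t)) l)) r.
    move=> j l r Hl Hr. rewrite wenc_vl //. exact: ltn_trans (H3 l Hl) Ht.
  split => r Hr; rewrite wenc_vl // tvc_tf.
  + rewrite (H4 true r Hr). congr truth_fun. apply/eq_in_map => l.
    rewrite mem_iota add0n => /andP[_ Hl]. by rewrite Ea.
  + rewrite (H4 false r Hr). congr truth_fun. apply/eq_in_map => l.
    rewrite mem_iota add0n => /andP[_ Hl]. by rewrite Ea.
Qed.

Lemma compl_G2 L M1 M2 D : valid L M1 M2 D ->
  (forall d', valid L M1 M2 d' -> cnt M1 M2 d' <= cnt M1 M2 D) -> 0 < size D ->
  forall i, i < size L -> forall u, u < size D ^ nth 0 L i ->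
  exists t, t < size D /\ forall j r, r < Njj M1 M2 j ->
    fj j (nth dn0 D t) r = truth_fun (Mjj M1 M2 j) i
       [seq fj j (nth dn0 D (asgd (size D) u l)) r | l <- iota 0 (nth 0 L i)].
Proof.
move=> HvD Hmax Hm i Hi u Hu.
set k := nth 0 L i. set m := size D.
pose dcode := enc_seq id (mkseq (fun l => asgd m u l) k).
have Hdc : forall l, l < k -> cnth dcode l = asgd m u l.
  move=> l Hl. by rewrite /dcode cnth_enc nth_mkseq.
pose e := MkDN i.+1 dcode
  (fun r => truth_fun M1 i [seq f1 (nth dn0 D (cnth dcode l)) r | l <- iota 0 k])
  (fun r => truth_fun M2 i [seq f2 (nth dn0 D (cnth dcode l)) r | l <- iota 0 k]).
have He : DValid L M1 M2 (rcons D e) (size D).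
  rewrite /DValid nth_rcons ltnn eqxx. right. rewrite /= subn1 /=.
  split => //; split => //; split.
  + move=> l Hl. rewrite Hdc //. exact: ltn_pmod.
  + move=> j r Hr. case: j Hr => Hr /=; congr truth_fun; apply/eq_in_map => l;
      rewrite mem_iota add0n => /andP[_ Hl]; by rewrite nth_rcons Hdc // ltn_pmod.
have [t [Ht Et]] := absorb HvD Hmax He.
exists t; split => // j r Hr. rewrite Et //.
case: j {Hr Et} => /=; congr truth_fun; apply/eq_in_map => l;
  rewrite mem_iota add0n => /andP[_ Hl]; by rewrite Hdc.
Qed.

Lemma complete L M1 M2 : exists w,
  RGoodP w (LC L) (nv M1) (DC M1) (TC M1) (nv M2) (DC M2) (TC M2) \/
  RBadP w (LC L) (nv M1) (DC M1) (TC M1) (nv M2) (DC M2) (TC M2).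
Proof.
have [D [HvD Hmax]] := max_deriv L M1 M2.
set w := wenc M1 M2 D.
have G1 := compl_G1 HvD Hmax.
have Hm : 0 < size D.
  have [t [Ht _]] := G1 0 (eq_ind_r (fun z => 0 < z) (ltn0Sn (nv M2)) (addn1 _)).
  exact: leq_ltn_trans (leq0n _) Ht.
have G2 := compl_G2 HvD Hmax Hm.
exists w.
case: (classic (exists t, t < cfst w /\
    ((forall r, r < (nv M1 + 1) ^ (nv M2 + 1) -> memc (vl w true t r) (DC M1)) /\
     ~ (forall r, r < (nv M2 + 1) ^ (nv M2 + 1) -> memc (vl w false t r) (DC M2))))) => Hb.
- right; split => //. move=> t; rewrite /w wenc_fst => Ht. exact: RValid_of.
- left. split; last split.
  + move=> v Hv. have [t [Ht Et]] := G1 v Hv. exists t. rewrite /w wenc_fst; split => //.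
    split => r Hr; rewrite wenc_vl //; [exact: (Et true r Hr) | exact: (Et false r Hr)].
  + move=> i Hi Hdr u Hu. rewrite cdrop_size in Hdr. rewrite /w wenc_fst cnth_enc in Hu.
    have [t [Ht Et]] := G2 i Hdr u Hu.
    exists t. rewrite /w wenc_fst; split => //.
    have Ea : forall j l r, r < Njj M1 M2 j ->
       vl (wenc M1 M2 D) j (asgd (size D) u l) r = fj j (nth dn0 D (asgd (size D) u l)) r.
      move=> j l r Hr. rewrite wenc_vl //. exact: ltn_pmod.
    split => r Hr; rewrite wenc_vl // tvc_tf cnth_enc.
    * rewrite (Et true r Hr). congr truth_fun. apply/eq_in_map => l _. by rewrite Ea.
    * rewrite (Et false r Hr). congr truth_fun. apply/eq_in_map => l _. by rewrite Ea.
  + move=> t Ht HA. apply: NNPP => HB. apply: Hb. exists t; split => //.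
Qed.

Global Opaque Good Bad.
Lemma denComp1 f g xs : den (PComp f [:: g]) xs = den f [:: den g xs].
Proof. by []. Qed.
Lemma sem_or a b r : sem (EOr a b) r = (sem a r \/ sem b r).
Proof. by []. Qed.

Lemma nb0 (b : bool) : (nat_of_bool b == 0) = ~~ b.
Proof. by case: b. Qed.

Definition envp2 := PComp ppush [:: PProj 0; PComp ppush [:: PProj 1; PZero]].
Lemma den_envp2 w x xs : den envp2 (w :: x :: xs) = enc_seq id [:: w; x].
Proof. by rewrite /= !den_push. Qed.

Definition Cp := PComp (cc (ENot (EOr (Good 0) (Bad 0)))) [:: envp2].
Definition Gp := PComp (cc (Good 0)) [:: envp2].
Definition pinc := PComp Gp [:: PMu Cp; PProj 0].

Lemma mf_Cp : mufree Cp.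
Proof. change (mufree (cc (ENot (EOr (Good 0) (Bad 0)))) && (mufree envp2 && true)). by rewrite mf_cc. Qed.
Lemma mf_Gp : mufree Gp.
Proof. change (mufree (cc (Good 0)) && (mufree envp2 && true)). by rewrite mf_cc. Qed.

Lemma den_Cp s x : den Cp [:: s; x] = (eden (EOr (Good 0) (Bad 0)) [:: s; x] == 0).
Proof. by rewrite /Cp denComp1 den_envp2 cc_ok. Qed.
Lemma den_Gp s x : den Gp [:: s; x] = eden (Good 0) [:: s; x].
Proof. by rewrite /Gp denComp1 den_envp2 cc_ok. Qed.

Lemma pinc_evt L M1 M2 : exists b, evt pinc [:: enc_inst L M1 M2] b /\ (b != 0 <-> Qinc L M1 M2).
Proof.
set x := enc_inst L M1 M2.
pose F s := den Cp [:: s; x].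
have HF : forall s, evt Cp [:: s; x] (F s) by move=> s; apply: den_ok mf_Cp _.
have Hex : exists n, F n == 0.
  have [w Hw] := complete L M1 M2. exists w. rewrite /F den_Cp nb0.
  have : tr (EOr (Good 0) (Bad 0)) [:: w; x].
    rewrite sem_ok sem_or -!sem_ok Good_iff Bad_iff /x !xparams_inst. exact: Hw.
  by rewrite /tr.
have [n Hn Hmin] := ex_minnP Hex.
have Hmu : evt (PMu Cp) [:: x] n.
  apply: (evt_Mu (F := F)) => //; first exact/eqP.
  move=> s Hs. apply/negP => /Hmin. by rewrite leqNgt Hs.
have HP : evt (PProj 0) [:: x] x by exists 1 => [[|k]].
exists (den Gp [:: n; x]); split.
- apply: evt_Comp2 Hmu HP _. apply: den_ok mf_Gp _.
- rewrite den_Gp. move: Hn. rewrite /F den_Cp nb0 => HO.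
  have : tr (EOr (Good 0) (Bad 0)) [:: n; x] by [].
  rewrite sem_ok sem_or -!sem_ok Good_iff Bad_iff /x !xparams_inst => HGB.
  split.
  + exact: good_sound.
  + move=> HQ. case: HGB => [HG|HB] //.
    exfalso. exact: bad_sound HB HQ.
Qed.

Definition pswap := PComp (cc (EPair (EFst (EV 0)) (EPair (ESnd (ESnd (EV 0))) (EFst (ESnd (EV 0))))))
  [:: PComp ppush [:: PProj 0; PZero]].
Definition pand := PComp pif [:: PProj 0; PComp psg [:: PProj 1]; kp 0].
Definition peq := PComp pand [:: pinc; PComp pinc [:: pswap]].

Lemma swap_evt L M1 M2 : evt pswap [:: enc_inst L M1 M2] (enc_inst L M2 M1).
Proof.
have -> : enc_inst L M2 M1 = den pswap [:: enc_inst L M1 M2].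
  rewrite /pswap denComp1. have -> : den (PComp ppush [:: PProj 0; PZero]) [:: enc_inst L M1 M2] = enc_seq id [:: enc_inst L M1 M2] by rewrite /= den_push. rewrite cc_ok /=.
  by rewrite /enc_inst !csnd_pair !cfst_pair.
apply: den_ok. change (mufree (cc (EPair (EFst (EV 0)) (EPair (ESnd (ESnd (EV 0))) (EFst (ESnd (EV 0)))))) && (mufree (PComp ppush [:: PProj 0; PZero]) && true)).
by rewrite mf_cc.
Qed.

Lemma den_pand a b : den pand [:: a; b] = (a != 0) && (b != 0).
Proof. rewrite /pand /= den_if den_sg den_kp. by case: a. Qed.

Lemma evt_ex p xs b : evt p xs b -> exists k, peval k p xs = Some b.
Proof. move=> [k H]; exists k; exact: H. Qed.

Theorem corollary1 :
  decidable_inst (fun L M1 M2 => forall phi : form, Taut L M1 phi <-> Taut L M2 phi) /\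
  decidable_inst (fun L M1 M2 => forall phi : form, Taut L M1 phi -> Taut L M2 phi).
Proof.
split.
- exists peq => L M1 M2.
  have [b1 [H1 E1]] := pinc_evt L M1 M2.
  have [b2 [H2 E2]] := pinc_evt L M2 M1.
  have H2' : evt (PComp pinc [:: pswap]) [:: enc_inst L M1 M2] b2 := evt_Comp1 (swap_evt L M1 M2) H2.
  have Hp : evt pand [:: b1; b2] ((b1 != 0) && (b2 != 0)).
    rewrite -den_pand. apply: den_ok. exact: erefl.
  have [k Hk] := evt_ex (evt_Comp2 H1 H2' Hp).
  exists k, ((b1 != 0) && (b2 != 0)); split => //.
  rewrite nb. split.
  + move=> /andP[/E1 Q1 /E2 Q2] phi. split; [exact: Q1 | exact: Q2].
  + move=> HQ. apply/andP; split; [apply/E1 | apply/E2] => phi; by case: (HQ phi).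
- exists pinc => L M1 M2.
  have [b [H E]] := pinc_evt L M1 M2.
  have [k Hk] := evt_ex H.
  by exists k, b.
Qed.
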